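(* For $\boldsymbol\alpha\in\mathbb C^{n+1}$ with $\alpha_1^2+\cdots+\alpha_{n+1}^2=0$, integers $\ell\ge1$ and $k=1,\dots,n+1$, $$\mathbf A_k(\boldsymbol\alpha\cdot\mathbf x)^\ell=\hbar\,\ell\,\Big(\frac{2(\ell-1)+n-1}{2\ell+n-1}\Big)^{1/2}\alpha_k\,(\boldsymbol\alpha\cdot\mathbf x)^{\ell-1},$$ where $(\boldsymbol\alpha\cdot\mathbf x)=\sum_j\alpha_jx_j$ is regarded as a function on $S^n$; and $\mathbf A_k$ annihilates constants. Consequently $\mathbf A_k$ maps the space $\mathcal V_\ell$ of spherical harmonics of degree $\ell$ into $\mathcal V_{\ell-1}$ for $\ell>0$ and $\mathbf A_k\mathcal V_0=0$.
   Context: $n\in\{2,3,5\}$, $\hbar>0$. $\mathcal V_\ell$ is the space of restrictions to $S^n$ of harmonic homogeneous polynomials of degree $\ell$ on $\mathbb R^{n+1}$. $\Delta_{S^n}$ is the normalized spherical Laplacian on $L^2(S^n)$, the self-adjoint operator acting on $\mathcal V_k$ by the scalar $(k+\frac{n-1}{2})^2$. Define by functional calculus $\mathbf M=\sqrt{\tfrac{2}{n-1}}\,\Delta_{S^n}^{1/4}$ and $\mathbf N=\hbar(\sqrt{\Delta_{S^n}}-\tfrac{n-1}{2})$. Let $\tilde{\mathbf L}_{kj}$ be the restriction to $S^n$ of the angular momentum vector field $y_k\partial_{y_j}-y_j\partial_{y_k}$ on $\mathbb R^{n+1}$, and let $\mathbf E_k=\sum_{j=1}^{n+1}(-i x_j)(-i\hbar\tilde{\mathbf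 L}_{kj})+x_k\mathbf N$, where $x_j$ denotes multiplication by the $j$-th coordinate on $S^n$. Set $\mathbf A_k=\mathbf M\mathbf E_k\mathbf M^{-1}$. *)

(* Defs.v *)
From Stdlib Require Import Reals List ClassicalEpsilon.
Open Scope R_scope.

Record Cx := mkC { Cre : R ; Cim : R }.
Definition C0 : Cx := mkC 0 0.
Definition C1 : Cx := mkC 1 0.
Definition Ci : Cx := mkC 0 1.
Definition RtoC (r : R) : Cx := mkC r 0.
Definition Cadd (z w : Cx) : Cx := mkC (Cre z + Cre w) (Cim z + Cim w).
Definition Copp (z : Cx) : Cx := mkC (- Cre z) (- Cim z).
Definition Cmul (z w : Cx) : Cx :=
  mkC (Cre z * Cre w - Cim z * Cim w) (Cre z * Cim w + Cim z * Cre w).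
Definition Cscale (r : R) (z : Cx) : Cx := Cmul (RtoC r) z.
Fixpoint Cpow (z : Cx) (m : nat) : Cx :=
  match m with O => C1 | S m => Cmul (Cpow z m) z end.
Fixpoint Csum (m : nat) (f : nat -> Cx) : Cx :=
  match m with O => C0 | S m => Cadd (Csum m f) (f m) end.
Fixpoint sumR (m : nat) (f : nat -> R) : R :=
  match m with O => 0 | S m => sumR m f + f m end.
Fixpoint prodR (m : nat) (f : nat -> R) : R :=
  match m with O => 1 | S m => prodR m f * f m end.
Fixpoint sumN (m : nat) (f : nat -> nat) : nat :=
  match m with O => O | S m => (sumN m f + f m)%nat end.

(* Points of R^{n+1}: y : nat -> R, coordinates y 0, ..., y n
   (the paper's y_1, ..., y_{n+1}); coordinates >= n+1 are ignored. *)
Definition on_sphere (n : nat) (y : nat -> R) : Prop :=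
  sumR (n + 1) (fun j => y j ^ 2) = 1.

(* complex-valued functions; only their values on S^n matter *)
Definition sfun := (nat -> R) -> Cx.

(* the derivative at 0 of a real function (when it exists; it is unique) *)
Definition deriv0 (g : R -> R) : R :=
  epsilon (inhabits 0) (fun l => derivable_pt_lim g 0 l).

(* flow of the vector field y_k d/dy_j - y_j d/dy_k (a rotation; the identity
   when k = j) *)
Definition rot (k j : nat) (t : R) (y : nat -> R) : nat -> R :=
  fun i =>
    if Nat.eqb k j then y i
    else if Nat.eqb i j then y j * cos t + y k * sin t
    else if Nat.eqb i k then y k * cos t - y j * sin t
    else y i.

(* tilde L_{kj}: restriction to S^n of y_k d/dy_j - y_j d/dy_k, i.e. the
   derivative of f along the flow (which preserves S^n) *)
Definition Lvf (k j : nat) (f : sfun) : sfun :=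
  fun y => mkC (deriv0 (fun t => Cre (f (rot k j t y))))
               (deriv0 (fun t => Cim (f (rot k j t y)))).

Definition xmul (j : nat) (f : sfun) : sfun := fun y => Cmul (RtoC (y j)) (f y).

Definition shift (y : nat -> R) (j : nat) (t : R) : nat -> R :=
  fun i => if Nat.eqb i j then y i + t else y i.
Definition pd (j : nat) (P : sfun) : sfun :=
  fun y => mkC (deriv0 (fun t => Cre (P (shift y j t))))
               (deriv0 (fun t => Cim (P (shift y j t)))).
Definition laplacian (n : nat) (P : sfun) : sfun :=
  fun y => Csum (n + 1) (fun j => pd j (pd j P) y).
Definition harmonic (n : nat) (P : sfun) : Prop := forall y, laplacian n P y = C0.

(* a polynomial on R^{n+1}: list of (coefficient, exponent vector) *)
Definition monom (n : nat) (e : nat -> nat) (y : nat -> R) : R :=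
  prodR (n + 1) (fun j => y j ^ e j).
Definition evalP (n : nat) (ps : list (Cx * (nat -> nat))) : sfun :=
  fun y => fold_right (fun m acc => Cadd (Cmul (fst m) (RtoC (monom n (snd m) y))) acc)
                      C0 ps.

Definition Vsp (n l : nat) (f : sfun) : Prop :=
  exists ps : list (Cx * (nat -> nat)),
    Forall (fun m => sumN (n + 1) (snd m) = l) ps /\
    harmonic n (evalP n ps) /\
    forall y, on_sphere n y -> f y = evalP n ps y.

(* eigenvalue of Delta_{S^n} on V_k *)
Definition eig (n k : nat) : R := (INR k + (INR n - 1) / 2) ^ 2.

Definition is_decomp (n : nat) (f : sfun) (p : nat * (nat -> sfun)) : Prop :=
  (forall k, (k < fst p)%nat -> Vsp n k (snd p k)) /\
  forall y, on_sphere n y -> f y = Csum (fst p) (fun k => snd p k y).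

(* g(Delta_{S^n}) applied to f (f a finite sum of spherical harmonics) *)
Definition fcalc (n : nat) (g : R -> R) (f : sfun) : sfun :=
  let p := epsilon (inhabits (O, fun (_ : nat) (_ : nat -> R) => C0)) (is_decomp n f) in
  fun y => Csum (fst p) (fun k => Cscale (g (eig n k)) (snd p k y)).

Definition Mop (n : nat) : sfun -> sfun :=
  fcalc n (fun lam => sqrt (2 / (INR n - 1)) * sqrt (sqrt lam)).
Definition Minv (n : nat) : sfun -> sfun :=
  fcalc n (fun lam => / (sqrt (2 / (INR n - 1)) * sqrt (sqrt lam))).
Definition Nop (n : nat) (hbar : R) : sfun -> sfun :=
  fcalc n (fun lam => hbar * (sqrt lam - (INR n - 1) / 2)).

Definition Eop (n : nat) (hbar : R) (k : nat) (f : sfun) : sfun :=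
  fun y => Cadd
    (Csum (n + 1) (fun j =>
       Cmul (Cmul (Copp Ci) (RtoC (y j)))
            (Cmul (Cmul (Copp Ci) (RtoC hbar)) (Lvf k j f y))))
    (xmul k (Nop n hbar f) y).

Definition Aop (n : nat) (hbar : R) (k : nat) (f : sfun) : sfun :=
  Mop n (Eop n hbar k (Minv n f)).

Definition adot (n : nat) (alpha : nat -> Cx) : sfun :=
  fun y => Csum (n + 1) (fun j => Cmul (alpha j) (RtoC (y j))).

(* Main.v *)
Require Import Defs.
From Stdlib Require Import Reals.
Open Scope R_scope.
From Stdlib Require Import Lra Lia List ClassicalEpsilon FunctionalExtensionality.


Lemma Cx_ext (z w : Cx) : Cre z = Cre w -> Cim z = Cim w -> z = w.
Proof. destruct z, w; simpl; intros; subst; reflexivity. Qed.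

Ltac Csolve := apply Cx_ext; simpl; ring.

Lemma Cadd_comm z w : Cadd z w = Cadd w z. Proof. Csolve. Qed.
Lemma Cadd_assoc a b c : Cadd (Cadd a b) c = Cadd a (Cadd b c). Proof. Csolve. Qed.
Lemma Cadd_0_l z : Cadd C0 z = z. Proof. Csolve. Qed.
Lemma Cadd_0_r z : Cadd z C0 = z. Proof. Csolve. Qed.
Lemma Cmul_comm z w : Cmul z w = Cmul w z. Proof. Csolve. Qed.
Lemma Cmul_assoc a b c : Cmul (Cmul a b) c = Cmul a (Cmul b c). Proof. Csolve. Qed.
Lemma Cmul_0_l z : Cmul C0 z = C0. Proof. Csolve. Qed.
Lemma Cmul_0_r z : Cmul z C0 = C0. Proof. Csolve. Qed.
Lemma Cmul_1_l z : Cmul Defs.C1 z = z. Proof. Csolve. Qed.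
Lemma Cmul_addl a b c : Cmul (Cadd a b) c = Cadd (Cmul a c) (Cmul b c). Proof. Csolve. Qed.
Lemma Cmul_addr a b c : Cmul c (Cadd a b) = Cadd (Cmul c a) (Cmul c b). Proof. Csolve. Qed.
Lemma RtoC_mul a b : RtoC (a * b) = Cmul (RtoC a) (RtoC b). Proof. Csolve. Qed.
Lemma RtoC_add a b : RtoC (a + b) = Cadd (RtoC a) (RtoC b). Proof. Csolve. Qed.
Lemma Cscale_C0 r : Cscale r C0 = C0. Proof. Csolve. Qed.

Lemma Csum_ext m f g : (forall k, (k < m)%nat -> f k = g k) -> Csum m f = Csum m g.
Proof. induction m; simpl; intros H; [reflexivity|]. rewrite IHm by (intros; apply H; lia).
 rewrite H by lia; reflexivity. Qed.
Lemma Csum_add m f g : Csum m (fun k => Cadd (f k) (g k)) = Cadd (Csum m f) (Csum m g).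
Proof. induction m; simpl. Csolve. rewrite IHm. Csolve. Qed.
Lemma Csum_mull m c f : Csum m (fun k => Cmul c (f k)) = Cmul c (Csum m f).
Proof. induction m; simpl. Csolve. rewrite IHm. Csolve. Qed.
Lemma Csum_zero m : Csum m (fun _ => C0) = C0.
Proof. induction m; simpl; [reflexivity|]. rewrite IHm. Csolve. Qed.
Lemma Csum_first m f : Csum (S m) f = Cadd (f O) (Csum m (fun k => f (S k))).
Proof. induction m. simpl. Csolve. change (Csum (S (S m)) f) with (Cadd (Csum (S m) f) (f (S m))).
 rewrite IHm. simpl. Csolve. Qed.
Lemma Csum_delta m d x : (d < m)%nat -> Csum m (fun k => if Nat.eqb k d then x else C0) = x.
Proof. induction m; intros H; [lia|]. simpl. destruct (Nat.eqb m d) eqn:E.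
 apply Nat.eqb_eq in E; subst. rewrite Csum_ext with (g := fun _ => C0).
 rewrite Csum_zero; Csolve. intros k Hk. destruct (Nat.eqb k d) eqn:E2; [apply Nat.eqb_eq in E2; lia|auto].
 apply Nat.eqb_neq in E. rewrite IHm by lia. Csolve. Qed.
Lemma Csum_trunc m a F : (a <= m)%nat -> Csum m (fun k => if Nat.ltb k a then F k else C0) = Csum a F.
Proof. induction m; intros H. assert (a = O) by lia; subst; reflexivity.
 destruct (Nat.eq_dec a (S m)). subst. simpl. rewrite Csum_ext with (g:=F). 
 destruct (Nat.ltb m (S m)) eqn:E; [reflexivity| apply Nat.ltb_ge in E; lia].
 intros k Hk. destruct (Nat.ltb k (S m)) eqn:E; [reflexivity| apply Nat.ltb_ge in E; lia].
 simpl. rewrite IHm by lia. destruct (Nat.ltb m a) eqn:E; [apply Nat.ltb_lt in E; lia|]. Csolve. Qed.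
Lemma Csum_S m f : Csum (S m) f = Cadd (Csum m f) (f m). Proof. reflexivity. Qed.
Lemma Csum_split2 M f : Csum (2*M) f = Cadd (Csum M (fun i => f (2*i)%nat)) (Csum M (fun i => f (2*i+1)%nat)).
Proof. induction M. simpl. Csolve. replace (2 * S M)%nat with (S (S (2*M))) by lia.
 change (Csum (S (S (2*M))) f) with (Cadd (Cadd (Csum (2*M) f) (f (2*M)%nat)) (f (S (2*M)))).
 rewrite IHM. rewrite !Csum_S.
 replace (2*M+1)%nat with (S (2*M)) by lia. Csolve. Qed.

Lemma D_ext f g x l l' : derivable_pt_lim f x l -> (forall t, f t = g t) -> l = l' -> derivable_pt_lim g x l'.
Proof. intros H E L. subst. replace g with f; [exact H|]. apply functional_extensionality; auto. Qed.
Lemma D_mult f g x a b : derivable_pt_lim f x a -> derivable_pt_lim g x b ->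
  derivable_pt_lim (fun t => f t * g t) x (a * g x + f x * b).
Proof. intros. apply (derivable_pt_lim_mult f g); auto. Qed.
Lemma D_plus f g x a b : derivable_pt_lim f x a -> derivable_pt_lim g x b ->
  derivable_pt_lim (fun t => f t + g t) x (a + b).
Proof. intros. apply (derivable_pt_lim_plus f g); auto. Qed.
Lemma D_minus f g x a b : derivable_pt_lim f x a -> derivable_pt_lim g x b ->
  derivable_pt_lim (fun t => f t - g t) x (a - b).
Proof. intros. apply (derivable_pt_lim_minus f g); auto. Qed.
Lemma D_const c x : derivable_pt_lim (fun _ => c) x 0.
Proof. apply (derivable_pt_lim_const c). Qed.
Lemma D_idp c x : derivable_pt_lim (fun t => c + t) x 1.
Proof. eapply D_ext. apply D_plus. apply D_const. apply derivable_pt_lim_id. intros; reflexivity. ring. Qed.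

Lemma deriv0_eq g l : derivable_pt_lim g 0 l -> deriv0 g = l.
Proof. intros H. unfold deriv0. assert (H2 := epsilon_spec (inhabits 0) (fun l => derivable_pt_lim g 0 l) (ex_intro _ l H)).
 eapply uniqueness_limite; eauto. Qed.

Definition has_pd (j : nat) (f g : sfun) : Prop := forall y,
  derivable_pt_lim (fun t => Cre (f (shift y j t))) 0 (Cre (g y)) /\
  derivable_pt_lim (fun t => Cim (f (shift y j t))) 0 (Cim (g y)).

Lemma pd_eq j f g : has_pd j f g -> pd j f = g.
Proof. intros H. apply functional_extensionality; intros y. unfold pd. destruct (H y) as [H1 H2].
 rewrite (deriv0_eq _ _ H1), (deriv0_eq _ _ H2). destruct (g y); reflexivity. Qed.

Lemma shift0 y j : shift y j 0 = y.
Proof. apply functional_extensionality; intros i. unfold shift. destruct (Nat.eqb i j); ring. Qed.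

Lemma has_pd_const j c : has_pd j (fun _ => c) (fun _ => C0).
Proof. intros y; split; apply D_const. Qed.
Lemma has_pd_var j i : has_pd j (fun y => RtoC (y i)) (fun _ => RtoC (if Nat.eqb i j then 1 else 0)).
Proof. intros y; split; simpl. unfold shift. destruct (Nat.eqb i j). apply D_idp. apply D_const. apply D_const. Qed.
Lemma has_pd_add j f f' g g' : has_pd j f f' -> has_pd j g g' ->
  has_pd j (fun y => Cadd (f y) (g y)) (fun y => Cadd (f' y) (g' y)).
Proof. intros H1 H2 y; destruct (H1 y), (H2 y); split; simpl; apply D_plus; auto. Qed.
Lemma has_pd_mul j f f' g g' : has_pd j f f' -> has_pd j g g' ->
  has_pd j (fun y => Cmul (f y) (g y)) (fun y => Cadd (Cmul (f' y) (g y)) (Cmul (f y) (g' y))).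
Proof. intros H1 H2 y; destruct (H1 y) as [a b], (H2 y) as [c d]; split; simpl.
 - eapply D_ext. apply D_minus; [apply D_mult; [exact a|exact c]|apply D_mult; [exact b|exact d]].
   intros; reflexivity. cbv beta. rewrite !shift0. ring.
 - eapply D_ext. apply D_plus; [apply D_mult; [exact a|exact d]|apply D_mult; [exact b|exact c]].
   intros; reflexivity. cbv beta. rewrite !shift0. ring. Qed.

Inductive PP : sfun -> Prop :=
| PPc c : PP (fun _ => c)
| PPv i : PP (fun y => RtoC (y i))
| PPa f g : PP f -> PP g -> PP (fun y => Cadd (f y) (g y))
| PPm f g : PP f -> PP g -> PP (fun y => Cmul (f y) (g y)).

Lemma PP_has_pd f : PP f -> forall j, exists g, PP g /\ has_pd j f g.
Proof. induction 1; intros j.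
 - eexists; split; [apply PPc|apply has_pd_const].
 - eexists; split; [apply PPc|apply has_pd_var].
 - destruct (IHPP1 j) as [a [Pa Ha]], (IHPP2 j) as [b [Pb Hb]].
   exists (fun y => Cadd (a y) (b y)); split; [apply PPa; auto|apply has_pd_add; auto].
 - destruct (IHPP1 j) as [a [Pa Ha]], (IHPP2 j) as [b [Pb Hb]].
   exists (fun y => Cadd (Cmul (a y) (g y)) (Cmul (f y) (b y))); split; [apply PPa; apply PPm; auto|apply has_pd_mul; auto]. Qed.

Lemma PP_pd j f : PP f -> PP (pd j f).
Proof. intros H. destruct (PP_has_pd f H j) as [g [Pg Hg]]. rewrite (pd_eq _ _ _ Hg). auto. Qed.
Lemma PP_has_pd' j f : PP f -> has_pd j f (pd j f).
Proof. intros H. destruct (PP_has_pd f H j) as [g [Pg Hg]]. rewrite (pd_eq _ _ _ Hg). auto. Qed.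

Lemma pd_const j c : pd j (fun _ => c) = (fun _ => C0).
Proof. apply pd_eq, has_pd_const. Qed.
Lemma pd_var j i : pd j (fun y => RtoC (y i)) = (fun _ => RtoC (if Nat.eqb i j then 1 else 0)).
Proof. apply pd_eq, has_pd_var. Qed.
Lemma pd_add j f g : PP f -> PP g -> pd j (fun y => Cadd (f y) (g y)) = (fun y => Cadd (pd j f y) (pd j g y)).
Proof. intros; apply pd_eq, has_pd_add; apply PP_has_pd'; auto. Qed.
Lemma pd_mul j f g : PP f -> PP g -> pd j (fun y => Cmul (f y) (g y)) =
   (fun y => Cadd (Cmul (pd j f y) (g y)) (Cmul (f y) (pd j g y))).
Proof. intros; apply pd_eq, has_pd_mul; apply PP_has_pd'; auto. Qed.
Lemma pd_cmul j c f : PP f -> pd j (fun y => Cmul c (f y)) = (fun y => Cmul c (pd j f y)).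
Proof. intros. rewrite (pd_mul j (fun _ => c) f) by (auto; apply PPc). rewrite pd_const.
 apply functional_extensionality; intros; Csolve. Qed.

Lemma PP_Csum m F : (forall k, (k < m)%nat -> PP (F k)) -> PP (fun y => Csum m (fun k => F k y)).
Proof. induction m; intros H; simpl. apply PPc. apply PPa. apply IHm; intros; apply H; lia. apply H; lia. Qed.
Lemma pd_Csum j m F : (forall k, (k < m)%nat -> PP (F k)) ->
  pd j (fun y => Csum m (fun k => F k y)) = (fun y => Csum m (fun k => pd j (F k) y)).
Proof. induction m; intros H; simpl. apply pd_const.
 rewrite pd_add. rewrite IHm by (intros; apply H; lia). reflexivity.
 apply PP_Csum; intros; apply H; lia. apply H; lia. Qed.

Lemma pd_comm f : PP f -> forall i j, pd i (pd j f) = pd j (pd i f).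
Proof. induction 1; intros a b.
 - rewrite !pd_const. reflexivity.
 - rewrite !pd_var, !pd_const. reflexivity.
 - rewrite (pd_add b f g), (pd_add a f g) by auto.
   rewrite (pd_add a (pd b f)), (pd_add b (pd a f)) by (apply PP_pd; auto).
   rewrite IHPP1, IHPP2. reflexivity.
 - rewrite (pd_mul b), (pd_mul a) by auto.
   assert (P1 : forall c, PP (pd c f)) by (intros; apply PP_pd; auto).
   assert (P2 : forall c, PP (pd c g)) by (intros; apply PP_pd; auto).
   rewrite (pd_add a), (pd_add b) by (apply PPm; auto).
   rewrite !pd_mul by auto. rewrite IHPP1, IHPP2.
   apply functional_extensionality; intros y. Csolve. Qed.

Section Lap.
Variable n : nat.

Lemma PP_lap f : PP f -> PP (laplacian n f).
Proof. intros H. unfold laplacian. apply (PP_Csum (n+1) (fun j => pd j (pd j f))).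
 intros; do 2 apply PP_pd; auto. Qed.

Lemma lap_add f g : PP f -> PP g -> laplacian n (fun y => Cadd (f y) (g y)) =
  (fun y => Cadd (laplacian n f y) (laplacian n g y)).
Proof. intros Hf Hg. apply functional_extensionality; intros y. unfold laplacian.
 rewrite <- Csum_add. apply Csum_ext; intros j _. rewrite (pd_add j f g) by auto.
 rewrite (pd_add j (pd j f) (pd j g)) by (apply PP_pd; auto). reflexivity. Qed.

Lemma lap_cmul c f : PP f -> laplacian n (fun y => Cmul c (f y)) = (fun y => Cmul c (laplacian n f y)).
Proof. intros Hf. apply functional_extensionality; intros y. unfold laplacian.
 rewrite <- Csum_mull. apply Csum_ext; intros j _. rewrite (pd_cmul j c f) by auto.
 rewrite (pd_cmul j c (pd j f)) by (apply PP_pd; auto). reflexivity. Qed.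

Lemma lap_const c : laplacian n (fun _ => c) = (fun _ => C0).
Proof. apply functional_extensionality; intros y. unfold laplacian.
 rewrite Csum_ext with (g := fun _ => C0). apply Csum_zero. intros j _. rewrite !pd_const. reflexivity. Qed.

Lemma lap_Csum K F : (forall k, (k < K)%nat -> PP (F k)) ->
  laplacian n (fun y => Csum K (fun k => F k y)) = (fun y => Csum K (fun k => laplacian n (F k) y)).
Proof. induction K; intros H; simpl. apply lap_const.
 rewrite lap_add. rewrite IHK by (intros; apply H; lia). reflexivity.
 apply PP_Csum; intros; apply H; lia. apply H; lia. Qed.

Lemma lap_mul F G : PP F -> PP G -> forall y,
  laplacian n (fun y => Cmul (F y) (G y)) y =
  Cadd (Cadd (Cmul (F y) (laplacian n G y)) (Cmul (G y) (laplacian n F y)))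
       (Cmul (RtoC 2) (Csum (n+1) (fun j => Cmul (pd j F y) (pd j G y)))).
Proof. intros HF HG y. unfold laplacian. rewrite <- Csum_mull, <- !Csum_mull, <- !Csum_add.
 apply Csum_ext; intros j _. rewrite (pd_mul j F G) by auto.
 rewrite (pd_add j) by (apply PPm; auto; apply PP_pd; auto).
 rewrite !pd_mul by (auto; apply PP_pd; auto). Csolve. Qed.

Definition rr (y : nat -> R) : Cx := Csum (n+1) (fun j => Cmul (RtoC (y j)) (RtoC (y j))).

Lemma PP_rr : PP rr.
Proof. unfold rr. apply (PP_Csum (n+1) (fun j y => Cmul (RtoC (y j)) (RtoC (y j)))).
 intros; apply PPm; apply PPv. Qed.

Lemma pd_rr j : (j < n+1)%nat -> pd j rr = (fun y => Cmul (RtoC 2) (RtoC (y j))).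
Proof. intros Hj. unfold rr. rewrite (pd_Csum j (n+1) (fun k y => Cmul (RtoC (y k)) (RtoC (y k))))
  by (intros; apply PPm; apply PPv). apply functional_extensionality; intros y.
 rewrite Csum_ext with (g := fun k => if Nat.eqb k j then Cmul (RtoC 2) (RtoC (y j)) else C0).
 apply Csum_delta; auto.
 intros k _. rewrite (pd_mul j (fun y => RtoC (y k)) (fun y => RtoC (y k))) by apply PPv.
 rewrite pd_var. destruct (Nat.eqb k j) eqn:E. apply Nat.eqb_eq in E; subst. Csolve. Csolve. Qed.

Lemma pd2_rr j : (j < n+1)%nat -> pd j (pd j rr) = (fun _ => RtoC 2).
Proof. intros Hj. rewrite pd_rr by auto. rewrite (pd_cmul j (RtoC 2) (fun y => RtoC (y j))) by apply PPv.
 rewrite pd_var. rewrite Nat.eqb_refl. apply functional_extensionality; intros; Csolve. Qed.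

Lemma Csum_const m c : Csum m (fun _ => c) = Cmul (RtoC (INR m)) c.
Proof. induction m. simpl. Csolve. rewrite Csum_S, IHm, S_INR. Csolve. Qed.

Definition Eul (d : nat) (f : sfun) : Prop := forall y,
  Csum (n+1) (fun j => Cmul (RtoC (y j)) (pd j f y)) = Cmul (RtoC (INR d)) (f y).

Lemma Eul_rr : Eul 2 rr.
Proof. intros y. rewrite Csum_ext with (g := fun j => Cmul (RtoC 2) (Cmul (RtoC (y j)) (RtoC (y j)))).
 rewrite Csum_mull. unfold rr. simpl INR. Csolve.
 intros j Hj. rewrite pd_rr by auto. Csolve. Qed.

Lemma Eul_mul a b f g : PP f -> PP g -> Eul a f -> Eul b g -> Eul (a+b) (fun y => Cmul (f y) (g y)).
Proof. intros Pf Pg Ef Eg y.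
 rewrite (Csum_ext (n+1) _ (fun j => Cadd (Cmul (g y) (Cmul (RtoC (y j)) (pd j f y)))
    (Cmul (f y) (Cmul (RtoC (y j)) (pd j g y))))).
 rewrite Csum_add, !Csum_mull, Ef, Eg, plus_INR. Csolve. intros j _. rewrite pd_mul by auto. Csolve. Qed.

Lemma Eul_add d f g : PP f -> PP g -> Eul d f -> Eul d g -> Eul d (fun y => Cadd (f y) (g y)).
Proof. intros Pf Pg Ef Eg y.
 rewrite (Csum_ext (n+1) _ (fun j => Cadd (Cmul (RtoC (y j)) (pd j f y)) (Cmul (RtoC (y j)) (pd j g y)))).
 rewrite Csum_add, Ef, Eg. Csolve. intros j _. rewrite pd_add by auto. Csolve. Qed.

Lemma Eul_cmul d c f : PP f -> Eul d f -> Eul d (fun y => Cmul c (f y)).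
Proof. intros Pf Ef y.
 rewrite Csum_ext with (g := fun j => Cmul c (Cmul (RtoC (y j)) (pd j f y))).
 rewrite Csum_mull, Ef. Csolve. intros j _. rewrite pd_cmul by auto. Csolve. Qed.

Lemma Eul_const0 d : Eul d (fun _ => C0).
Proof. intros y. rewrite Csum_ext with (g := fun _ => C0). rewrite Csum_zero. Csolve.
 intros j _. rewrite pd_const. Csolve. Qed.

Lemma PP_Cpow f m : PP f -> PP (fun y => Cpow (f y) m).
Proof. intros H. induction m; simpl. apply PPc. apply PPm; auto. Qed.

Lemma Eul_Cpow_rr m : Eul (2*m) (fun y => Cpow (rr y) m).
Proof. induction m. intros y. simpl. rewrite Csum_ext with (g := fun _ => C0).
 rewrite Csum_zero. Csolve. intros j _. rewrite pd_const. Csolve.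
 replace (2 * S m)%nat with (2*m + 2)%nat by lia. simpl Cpow.
 apply Eul_mul; auto. apply PP_Cpow, PP_rr. apply PP_rr. apply Eul_rr. Qed.

Lemma lap_rr_mul d G : PP G -> Eul d G -> forall y,
  laplacian n (fun y => Cmul (rr y) (G y)) y =
  Cadd (Cmul (rr y) (laplacian n G y)) (Cmul (RtoC (2 * (INR n + 1) + 4 * INR d)) (G y)).
Proof. intros PG EG y. rewrite lap_mul by (auto; apply PP_rr).
 assert (L : laplacian n rr y = RtoC (2 * (INR n + 1))).
 { unfold laplacian. rewrite Csum_ext with (g := fun _ => RtoC 2). rewrite Csum_const.
   rewrite plus_INR. simpl INR. Csolve. intros j Hj. rewrite pd2_rr by auto. reflexivity. }
 rewrite L.
 rewrite Csum_ext with (g := fun j => Cmul (RtoC 2) (Cmul (RtoC (y j)) (pd j G y))).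
 rewrite Csum_mull, EG. Csolve. intros j Hj. rewrite pd_rr by auto. Csolve. Qed.

Definition Tm (Q : sfun) (m : nat) : sfun := fun y => Cmul (Cpow (rr y) m) (Q y).

Fixpoint mu (d m : nat) : R := match m with
  | O => 2 * (INR n + 1) + 4 * INR d
  | S m' => mu d m' + (2 * (INR n + 1) + 4 * INR (2 * S m' + d)) end.

Lemma mu_pos d m : 0 < mu d m.
Proof. induction m. simpl mu. pose proof (pos_INR n); pose proof (pos_INR d); lra.
 change (mu d (S m)) with (mu d m + (2 * (INR n + 1) + 4 * INR (2 * S m + d))).
 pose proof (pos_INR n); pose proof (pos_INR (2 * S m + d)); lra. Qed.

Lemma PP_Tm Q m : PP Q -> PP (Tm Q m).
Proof. intros; unfold Tm. apply PPm; auto. apply PP_Cpow, PP_rr. Qed.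

Lemma Eul_Tm d Q m : PP Q -> Eul d Q -> Eul (2*m + d) (Tm Q m).
Proof. intros; unfold Tm. apply Eul_mul; auto. apply PP_Cpow, PP_rr. apply Eul_Cpow_rr. Qed.

Lemma Tm_S Q m : Tm Q (S m) = (fun y => Cmul (rr y) (Tm Q m y)).
Proof. apply functional_extensionality; intros y. unfold Tm. simpl Cpow. Csolve. Qed.

Lemma lap_Tm0 Q : PP Q -> (forall y, laplacian n Q y = C0) -> laplacian n (Tm Q 0) = (fun _ => C0).
Proof. intros P H. unfold Tm. simpl Cpow. rewrite lap_cmul by auto.
 apply functional_extensionality; intros y. rewrite H. Csolve. Qed.

Lemma lap_TmS d Q : PP Q -> (forall y, laplacian n Q y = C0) -> Eul d Q -> forall m,
  laplacian n (Tm Q (S m)) = (fun y => Cmul (RtoC (mu d m)) (Tm Q m y)).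
Proof. intros P H E. induction m; apply functional_extensionality; intros y.
 - rewrite Tm_S. rewrite (lap_rr_mul d (Tm Q 0) (PP_Tm Q 0 P) (Eul_Tm d Q 0 P E)).
   rewrite lap_Tm0 by auto. simpl mu. Csolve.
 - rewrite Tm_S. rewrite (lap_rr_mul (2 * S m + d) (Tm Q (S m)) (PP_Tm Q (S m) P) (Eul_Tm d Q (S m) P E)).
   rewrite IHm. rewrite Tm_S. simpl mu. Csolve. Qed.

Fixpoint lapn (a : nat) (f : sfun) : sfun := match a with O => f | S a' => laplacian n (lapn a' f) end.

Lemma PP_lapn a f : PP f -> PP (lapn a f).
Proof. intros; induction a; simpl; auto. apply PP_lap; auto. Qed.

Lemma lapn_zero a : lapn a (fun _ => C0) = (fun _ => C0).
Proof. induction a; simpl; auto. rewrite IHa. apply lap_const. Qed.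

Lemma lapn_Csum a K F : (forall k, (k < K)%nat -> PP (F k)) ->
  lapn a (fun y => Csum K (fun k => F k y)) = (fun y => Csum K (fun k => lapn a (F k) y)).
Proof. intros H. induction a; simpl. reflexivity. rewrite IHa. apply lap_Csum.
 intros; apply PP_lapn; auto. Qed.

Lemma lapn_Tm d Q : PP Q -> (forall y, laplacian n Q y = C0) -> Eul d Q -> forall a b, (a <= b)%nat ->
  exists c, c <> 0 /\ lapn a (Tm Q b) = (fun y => Cmul (RtoC c) (Tm Q (b - a) y)).
Proof. intros P H E. induction a; intros b Hab.
 - exists 1. split. lra. apply functional_extensionality; intros y. rewrite Nat.sub_0_r. simpl. Csolve.
 - destruct (IHa b) as [c [Hc Ec]]; [lia|]. exists (c * mu d (b - S a)). split.
   pose proof (mu_pos d (b - S a)). intros Z; apply Rmult_integral in Z; lra.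
   simpl lapn. rewrite Ec. rewrite lap_cmul by (apply PP_Tm; auto).
   replace (b - a)%nat with (S (b - S a)) by lia. rewrite (lap_TmS d) by auto.
   apply functional_extensionality; intros y. Csolve. Qed.

Lemma lapn_Tm_gt d Q : PP Q -> (forall y, laplacian n Q y = C0) -> Eul d Q -> forall a b, (b < a)%nat ->
  lapn a (Tm Q b) = (fun _ => C0).
Proof. intros P H E a b Hab. destruct (lapn_Tm d Q P H E b b (le_n b)) as [c [Hc Ec]].
 replace a with ((a - S b) + S b)%nat by lia. 
 assert (forall k f, lapn (k + S b) f = lapn k (lapn (S b) f)).
 { induction k; intros; simpl; auto. rewrite IHk; auto. }
 rewrite H0. simpl lapn at 2. rewrite Ec. rewrite lap_cmul by (apply PP_Tm; auto).
 rewrite Nat.sub_diag, lap_Tm0 by auto.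
 replace (fun y : nat -> R => Cmul (RtoC c) C0) with (fun _ : nat -> R => C0).
 apply lapn_zero. apply functional_extensionality; intros; Csolve. Qed.

Definition HE (f : sfun) : Prop := PP f /\ (forall y, laplacian n f y = C0) /\ exists d, Eul d f.

Lemma Cmul_RtoC_eq0 c z : c <> 0 -> Cmul (RtoC c) z = C0 -> z = C0.
Proof. intros Hc H. destruct z as [a b]. unfold Cmul, RtoC, C0 in H; simpl in H. injection H; intros.
 apply Cx_ext; simpl. apply (Rmult_eq_reg_l c); [lra|auto]. apply (Rmult_eq_reg_l c); [lra|auto]. Qed.

Lemma U0 K : forall Q : nat -> sfun, (forall i, (i < K)%nat -> HE (Q i)) ->
  (forall y, Csum K (fun i => Tm (Q i) (K - 1 - i) y) = C0) -> forall i, (i < K)%nat -> forall y, Q i y = C0.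
Proof. induction K; intros Q HQ Hs i Hi; [lia|].
 assert (PPT : forall k, (k < S K)%nat -> PP (Tm (Q k) (S K - 1 - k))).
 { intros k Hk. apply PP_Tm. apply HQ; auto. }
 assert (G : (fun y => Csum (S K) (fun i => Tm (Q i) (S K - 1 - i) y)) = (fun _ => C0)).
 { apply functional_extensionality; auto. }
 assert (Q0 : forall y, Q O y = C0).
 { assert (G2 := f_equal (lapn K) G). rewrite lapn_Csum in G2 by auto. rewrite lapn_zero in G2.
   destruct (HQ O) as [P0 [H0 [d0 E0]]]; [lia|].
   destruct (lapn_Tm d0 (Q O) P0 H0 E0 K K (le_n K)) as [c [Hc Ec]].
   intros y. assert (G3 := f_equal (fun F => F y) G2). cbv beta in G3.
   rewrite Csum_first in G3. replace (S K - 1 - 0)%nat with K in G3 by lia. change (fun y0 : nat -> R => Tm (Q 0%nat) K y0) with (Tm (Q 0%nat) K) in G3. rewrite Ec in G3.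
   rewrite Csum_ext with (g := fun _ => C0) in G3. rewrite Csum_zero, Cadd_0_r in G3.
   rewrite Nat.sub_diag in G3. unfold Tm in G3. simpl Cpow in G3. rewrite Cmul_1_l in G3.
   eapply Cmul_RtoC_eq0; eauto.
   intros k Hk. destruct (HQ (S k)) as [Pk [Hk' [dk Ek]]]; [lia|].
   rewrite (lapn_Tm_gt dk) by (auto; lia). reflexivity. }
 destruct i. apply Q0.
 apply (IHK (fun i => Q (S i))); [intros; apply HQ; lia| |lia].
 intros y. specialize (Hs y). rewrite Csum_first in Hs. unfold Tm at 1 in Hs. rewrite Q0, Cmul_0_r, Cadd_0_l in Hs.
 rewrite <- Hs. apply Csum_ext. intros k Hk. f_equal. lia. Qed.

End Lap.

Definition has_pdR (k : nat) (u u' : (nat -> R) -> R) : Prop :=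
  forall y, derivable_pt_lim (fun t => u (shift y k t)) 0 (u' y).

Lemma has_pdR_C k u u' : has_pdR k u u' -> has_pd k (fun y => RtoC (u y)) (fun y => RtoC (u' y)).
Proof. intros H y; split; simpl. apply H. apply D_const. Qed.

Lemma pow_pd k i a : has_pdR k (fun y => y i ^ a) (fun y => if Nat.eqb i k then INR a * y i ^ (a - 1) else 0).
Proof. induction a; intros y.
 - simpl. destruct (Nat.eqb i k); apply (D_ext (fun _ => 1) _ _ 0); try apply D_const; intros; simpl; ring.
 - specialize (IHa y). destruct (Nat.eqb i k) eqn:E.
   + eapply (D_ext (fun t => shift y k t i * shift y k t i ^ a)). apply D_mult. 2: exact IHa.
     { unfold shift; cbv beta; rewrite E. apply D_idp. }
     intros t; simpl; reflexivity.
     cbv beta. rewrite shift0. rewrite S_INR. destruct a. simpl. ring. replace (S (S a) - 1)%nat with (S a) by lia.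
     replace (S a - 1)%nat with a by lia. simpl. ring.
   + eapply (D_ext (fun t => shift y k t i * shift y k t i ^ a)). apply D_mult. 2: exact IHa.
     { unfold shift; cbv beta; rewrite E. apply D_const. }
     intros t; simpl; reflexivity.
     cbv beta. ring. Qed.

Definition dec (e : nat -> nat) (k : nat) : nat -> nat := fun i => if Nat.eqb i k then (e i - 1)%nat else e i.

Lemma prodR_ext m F G : (forall i, (i < m)%nat -> F i = G i) -> prodR m F = prodR m G.
Proof. induction m; simpl; intros; auto. rewrite IHm by (intros; apply H; lia). rewrite H by lia; auto. Qed.

Lemma prodR_upd m F G j a : (j < m)%nat -> (forall i, i <> j -> F i = G i) -> F j = a * G j ->
  prodR m F = a * prodR m G.
Proof. induction m; intros Hj H1 H2; [lia|]. simpl. destruct (Nat.eq_dec m j).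
 - subst. rewrite (prodR_ext j F G) by (intros; apply H1; lia). rewrite H2; ring.
 - rewrite IHm by (auto; lia). rewrite H1 by auto. ring. Qed.

Lemma prod_pd k m e : has_pdR k (fun y => prodR m (fun i => y i ^ e i))
  (fun y => if andb (Nat.ltb k m) (Nat.ltb 0 (e k)) then INR (e k) * prodR m (fun i => y i ^ dec e k i) else 0).
Proof. induction m; intros y.
 - simpl. apply D_const.
 - simpl prodR. eapply (D_ext (fun t => prodR m (fun i => shift y k t i ^ e i) * shift y k t m ^ e m)).
   apply D_mult. apply IHm. apply pow_pd. intros; reflexivity.
   cbv beta. rewrite shift0.
   destruct (Nat.ltb k m) eqn:E1.
   + apply Nat.ltb_lt in E1. assert (Nat.ltb k (S m) = true) by (apply Nat.ltb_lt; lia). rewrite H. cbn [andb].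
     assert (Nat.eqb m k = false) by (apply Nat.eqb_neq; lia). rewrite H0.
     replace (dec e k m) with (e m) by (unfold dec; rewrite H0; auto). destruct (Nat.ltb 0 (e k)); ring.
   + apply Nat.ltb_ge in E1. cbn [andb]. destruct (Nat.eq_dec k m).
     * subst. rewrite Nat.eqb_refl. assert (Nat.ltb m (S m) = true) by (apply Nat.ltb_lt; lia). rewrite H. cbn [andb].
       replace (dec e m m) with (e m - 1)%nat by (unfold dec; rewrite Nat.eqb_refl; auto).
       rewrite (prodR_ext m (fun i => y i ^ dec e m i) (fun i => y i ^ e i)).
       destruct (Nat.ltb 0 (e m)) eqn:E2. ring. apply Nat.ltb_ge in E2. assert (e m = O) by lia. rewrite H0. simpl; ring.
       intros i Hi. unfold dec. assert (Nat.eqb i m = false) by (apply Nat.eqb_neq; lia). rewrite H0; auto.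
     * assert (Nat.ltb k (S m) = false) by (apply Nat.ltb_ge; lia). rewrite H. cbn [andb].
       assert (Nat.eqb m k = false) by (apply Nat.eqb_neq; lia). rewrite H0. ring. Qed.

Section Poly.
Variable n : nat.

Definition dlist (k : nat) (ps : list (Cx * (nat -> nat))) : list (Cx * (nat -> nat)) :=
  map (fun m => (Cscale (INR (snd m k)) (fst m), dec (snd m) k)) (filter (fun m => Nat.ltb 0 (snd m k)) ps).

Lemma monom_pd k e : (k < n+1)%nat -> has_pd k (fun y => RtoC (monom n e y))
  (fun y => if Nat.ltb 0 (e k) then RtoC (INR (e k) * monom n (dec e k) y) else C0).
Proof. intros Hk. unfold monom.
 replace (fun y => if Nat.ltb 0 (e k) then RtoC (INR (e k) * prodR (n+1) (fun j => y j ^ dec e k j)) else C0)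
  with (fun y => RtoC (if andb (Nat.ltb k (n+1)) (Nat.ltb 0 (e k)) then INR (e k) * prodR (n+1) (fun j => y j ^ dec e k j) else 0)).
 apply has_pdR_C. apply prod_pd.
 apply functional_extensionality; intros y. assert (Nat.ltb k (n+1) = true) by (apply Nat.ltb_lt; lia).
 rewrite H. cbn [andb]. destruct (Nat.ltb 0 (e k)); reflexivity. Qed.

Lemma has_pd_ext j f g g' : has_pd j f g -> (forall y, g y = g' y) -> has_pd j f g'.
Proof. intros H E. replace g' with g; auto. apply functional_extensionality; auto. Qed.

Lemma evalP_nil : evalP n nil = (fun _ => C0). Proof. reflexivity. Qed.
Lemma evalP_cons m ps : evalP n (m :: ps) = (fun y => Cadd (Cmul (fst m) (RtoC (monom n (snd m) y))) (evalP n ps y)).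
Proof. reflexivity. Qed.

Lemma evalP_has_pd k ps : (k < n+1)%nat -> has_pd k (evalP n ps) (evalP n (dlist k ps)).
Proof. intros Hk. induction ps as [|[c e] ps IH].
 - rewrite evalP_nil. unfold dlist; simpl. rewrite evalP_nil. apply has_pd_const.
 - rewrite evalP_cons. simpl fst; simpl snd.
   assert (H := has_pd_add k _ _ _ _ (has_pd_mul k _ _ _ _ (has_pd_const k c) (monom_pd k e Hk)) IH).
   eapply has_pd_ext. exact H. intros y. cbv beta.
   unfold dlist. simpl filter. destruct (Nat.ltb 0 (e k)) eqn:E.
   + simpl map. rewrite evalP_cons. simpl fst; simpl snd. fold (dlist k ps). unfold Cscale. Csolve.
   + fold (dlist k ps). Csolve. Qed.

Lemma pd_evalP k ps : (k < n+1)%nat -> pd k (evalP n ps) = evalP n (dlist k ps).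
Proof. intros; apply pd_eq, evalP_has_pd; auto. Qed.

Lemma PP_powv i a : PP (fun y => RtoC (y i ^ a)).
Proof. induction a. simpl. apply PPc.
 replace (fun y : nat -> R => RtoC (y i ^ S a)) with (fun y => Cmul (RtoC (y i)) (RtoC (y i ^ a))).
 apply PPm; auto. apply PPv. apply functional_extensionality; intros; simpl; Csolve. Qed.

Lemma PP_prodR m e : PP (fun y => RtoC (prodR m (fun i => y i ^ e i))).
Proof. induction m. simpl. apply PPc.
 replace (fun y => RtoC (prodR (S m) (fun i => y i ^ e i))) with
   (fun y => Cmul (RtoC (prodR m (fun i => y i ^ e i))) (RtoC (y m ^ e m))).
 apply PPm; auto. apply PP_powv. apply functional_extensionality; intros; simpl; Csolve. Qed.

Lemma PP_evalP ps : PP (evalP n ps).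
Proof. induction ps. rewrite evalP_nil. apply PPc. rewrite evalP_cons. apply PPa; auto. apply PPm. apply PPc.
 apply PP_prodR. Qed.

Lemma sumN_zero m e k : sumN m e = O -> (k < m)%nat -> e k = O.
Proof. induction m; simpl; intros H Hk. lia. destruct (Nat.eq_dec k m). subst; lia. apply IHm; lia. Qed.

Lemma Csum_INR_sumN m e M : Csum m (fun j => RtoC (INR (e j) * M)) = RtoC (INR (sumN m e) * M).
Proof. induction m. simpl; Csolve. rewrite Csum_S, IHm. simpl sumN. rewrite plus_INR. Csolve. Qed.

Lemma Eul_monom e : Eul n (sumN (n+1) e) (fun y => RtoC (monom n e y)).
Proof. intros y. rewrite (Csum_ext (n+1) _ (fun j => RtoC (INR (e j) * monom n e y))).
 rewrite Csum_INR_sumN. Csolve.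
 intros j Hj. rewrite (pd_eq _ _ _ (monom_pd j e Hj)). destruct (Nat.ltb 0 (e j)) eqn:E.
 - apply Nat.ltb_lt in E. unfold monom. rewrite (prodR_upd (n+1) (fun i => y i ^ e i) (fun i => y i ^ dec e j i) j (y j)); auto.
   Csolve. intros i Hi. unfold dec. apply Nat.eqb_neq in Hi. rewrite Hi. auto.
   unfold dec. rewrite Nat.eqb_refl. destruct (e j). lia. simpl. rewrite Nat.sub_0_r. auto.
 - apply Nat.ltb_ge in E. assert (e j = O) by lia. rewrite H. simpl INR. Csolve. Qed.

Lemma Eul_evalP d ps : Forall (fun m => sumN (n+1) (snd m) = d) ps -> Eul n d (evalP n ps).
Proof. induction 1. rewrite evalP_nil. apply Eul_const0. rewrite evalP_cons.
 apply Eul_add. apply PPm. apply PPc. apply PP_prodR. apply PP_evalP.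
 apply Eul_cmul. apply PP_prodR. rewrite <- H. apply Eul_monom. auto. Qed.

Lemma monom_scale e c y : monom n e (fun i => c * y i) = c ^ (sumN (n+1) e) * monom n e y.
Proof. unfold monom. generalize (n+1)%nat. induction n0. simpl; ring. simpl. rewrite IHn0, pow_add, Rpow_mult_distr. ring. Qed.

Lemma evalP_scale d ps c y : Forall (fun m => sumN (n+1) (snd m) = d) ps ->
  evalP n ps (fun i => c * y i) = Cmul (RtoC (c ^ d)) (evalP n ps y).
Proof. induction 1. simpl. Csolve. rewrite !evalP_cons. cbv beta. rewrite IHForall, monom_scale, H. Csolve. Qed.

Lemma evalP_loc ps y y' : (forall j, (j < n+1)%nat -> y j = y' j) -> evalP n ps y = evalP n ps y'.
Proof. intros H. induction ps. reflexivity. rewrite !evalP_cons. cbv beta. rewrite IHps. unfold monom.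
 rewrite (prodR_ext (n+1) (fun j => y j ^ snd a j) (fun j => y' j ^ snd a j)). reflexivity.
 intros; rewrite H; auto. Qed.

Definition HH (d : nat) (f : sfun) : Prop :=
  PP f /\ (forall y, laplacian n f y = C0) /\ Eul n d f /\
  (forall c y, f (fun i => c * y i) = Cmul (RtoC (c ^ d)) (f y)) /\
  (forall y y', (forall j, (j < n+1)%nat -> y j = y' j) -> f y = f y').

Lemma HH_evalP d ps : Forall (fun m => sumN (n+1) (snd m) = d) ps -> harmonic n (evalP n ps) -> HH d (evalP n ps).
Proof. intros F H. split; [apply PP_evalP|]. split; [apply H|]. split; [apply Eul_evalP; auto|].
 split. intros; apply evalP_scale; auto. apply evalP_loc. Qed.

Lemma HH_zero d : HH d (fun _ => C0).
Proof. split; [apply PPc|]. split. intros; rewrite lap_const; auto. split. apply Eul_const0.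
 split; intros; [Csolve|auto]. Qed.

Lemma HH_add d f g : HH d f -> HH d g -> HH d (fun y => Cadd (f y) (g y)).
Proof. intros [P1 [L1 [E1 [S1 O1]]]] [P2 [L2 [E2 [S2 O2]]]]. split; [apply PPa; auto|].
 split. intros; rewrite lap_add by auto. rewrite L1, L2; Csolve. split. apply Eul_add; auto.
 split. intros; rewrite S1, S2; Csolve. intros. rewrite (O1 y y'), (O2 y y'); auto. Qed.

Lemma HH_cmul d c f : HH d f -> HH d (fun y => Cmul c (f y)).
Proof. intros [P1 [L1 [E1 [S1 O1]]]]. split; [apply PPm; auto; apply PPc|].
 split. intros; rewrite lap_cmul by auto. rewrite L1; Csolve. split. apply Eul_cmul; auto.
 split. intros; rewrite S1; Csolve. intros. rewrite (O1 y y'); auto. Qed.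

End Poly.

Lemma sumR_ext m f g : (forall k, (k < m)%nat -> f k = g k) -> sumR m f = sumR m g.
Proof. induction m; simpl; intros H; auto. rewrite IHm by (intros; apply H; lia). rewrite H by lia; auto. Qed.
Lemma sumR_scal m a f : sumR m (fun j => a * f j) = a * sumR m f.
Proof. induction m; simpl. ring. rewrite IHm; ring. Qed.
Lemma sumR_nonneg m f : (forall k, 0 <= f k) -> 0 <= sumR m f.
Proof. induction m; simpl; intros H. lra. pose proof (H m); pose proof (IHm H); lra. Qed.
Lemma sumR_zero_each m f : (forall k, 0 <= f k) -> sumR m f = 0 -> forall k, (k < m)%nat -> f k = 0.
Proof. induction m; simpl; intros H S k Hk. lia. pose proof (sumR_nonneg m f H). pose proof (H m).
 destruct (Nat.eq_dec k m). subst; lra. apply IHm; auto. lra. lia. Qed.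
Lemma Csum_RtoC m f : Csum m (fun j => RtoC (f j)) = RtoC (sumR m f).
Proof. induction m; simpl. reflexivity. rewrite IHm. Csolve. Qed.
Lemma sumR_e0 m : (1 <= m)%nat -> sumR m (fun j => (if Nat.eqb j 0 then 1 else 0) ^ 2) = 1.
Proof. induction m; intros H. lia. destruct m. simpl. ring.
 change (sumR (S (S m)) (fun j => (if Nat.eqb j 0 then 1 else 0) ^ 2)) with
  (sumR (S m) (fun j => (if Nat.eqb j 0 then 1 else 0) ^ 2) + (if Nat.eqb (S m) 0 then 1 else 0) ^ 2).
 rewrite IHm by lia. simpl. ring. Qed.

Section U.
Variable n : nat.

Lemma rr_sphere z : on_sphere n z -> rr n z = RtoC 1.
Proof. intros H. unfold rr. rewrite (Csum_ext (n+1) _ (fun j => RtoC (z j ^ 2))).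
 rewrite Csum_RtoC. unfold on_sphere in H. rewrite H. reflexivity. intros; Csolve. Qed.

Definition Scl (d : nat) (f : sfun) := forall c y, f (fun i => c * y i) = Cmul (RtoC (c ^ d)) (f y).
Definition Loc (f : sfun) := forall y y', (forall j, (j < n+1)%nat -> y j = y' j) -> f y = f y'.

Lemma vanish d f : Scl d f -> Loc f -> (forall z, on_sphere n z -> f z = C0) -> forall y, f y = C0.
Proof. intros Sf Lf Z y. set (s := sumR (n+1) (fun j => y j ^ 2)).
 assert (Hs : 0 <= s) by (apply sumR_nonneg; intros; apply pow2_ge_0).
 destruct (Req_dec s 0) as [E|E].
 - set (z := fun i : nat => if Nat.eqb i 0 then 1 else 0).
   assert (Hz : on_sphere n z) by (unfold on_sphere, z; apply sumR_e0; lia).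
   rewrite (Lf y (fun i => 0 * z i)). rewrite Sf, Z by auto. Csolve.
   intros j Hj. assert (y j ^ 2 = 0). apply (sumR_zero_each (n+1) (fun j => y j ^ 2)); auto. intros; apply pow2_ge_0.
   assert (y j = 0) by nra. rewrite H0; ring.
 - set (c := sqrt s). assert (Hc : 0 < c) by (apply sqrt_lt_R0; lra).
   assert (Hc2 : c ^ 2 = s) by (unfold c; rewrite pow2_sqrt; lra).
   set (z := fun i => y i / c).
   assert (Hz : on_sphere n z). { unfold on_sphere, z.
     rewrite (sumR_ext (n+1) _ (fun j => / c ^ 2 * y j ^ 2)). rewrite sumR_scal. fold s. rewrite Hc2. field. lra.
     intros; field; lra. }
   replace y with (fun i => c * z i). rewrite Sf, Z by auto. Csolve.
   apply functional_extensionality; intros i; unfold z; field; lra. Qed.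

Lemma Scl_Csum d K F : (forall k, (k < K)%nat -> Scl d (F k)) -> Scl d (fun y => Csum K (fun k => F k y)).
Proof. intros H c y. induction K; simpl. Csolve. rewrite IHK by (intros; apply H; lia). rewrite H by lia. Csolve. Qed.
Lemma Loc_Csum K F : (forall k, (k < K)%nat -> Loc (F k)) -> Loc (fun y => Csum K (fun k => F k y)).
Proof. intros H y y' E. apply Csum_ext. intros k Hk. apply H; auto. Qed.
Lemma Scl_rr : Scl 2 (rr n).
Proof. intros c y. unfold rr. rewrite <- Csum_mull. apply Csum_ext. intros; Csolve. Qed.
Lemma Loc_rr : Loc (rr n).
Proof. intros y y' E. unfold rr. apply Csum_ext. intros k Hk. rewrite E; auto. Qed.
Lemma Scl_Tm d Q m : Scl d Q -> Scl (2*m + d) (Tm n Q m).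
Proof. intros H c y. unfold Tm. rewrite H. 
 assert (forall m, Cpow (rr n (fun i => c * y i)) m = Cmul (RtoC (c ^ (2*m))) (Cpow (rr n y) m)).
 { induction m0. simpl. Csolve. simpl Cpow. rewrite IHm0, Scl_rr. replace (2 * S m0)%nat with (2*m0 + 2)%nat by lia.
   rewrite pow_add. Csolve. }
 rewrite H0, pow_add. Csolve. Qed.
Lemma Loc_Tm Q m : Loc Q -> Loc (Tm n Q m).
Proof. intros H y y' E. unfold Tm. rewrite (H y y'), (Loc_rr y y'); auto. Qed.

Lemma HH_HE d f : HH n d f -> HE n f.
Proof. intros [P [L [E _]]]. split; auto. split; auto. exists d; auto. Qed.

Lemma HH_neg d f y : HH n d f -> f (fun i => -1 * y i) = Cmul (RtoC ((-1) ^ d)) (f y).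
Proof. intros [_ [_ [_ [S _]]]]. apply S. Qed.

Lemma sphere_neg z : on_sphere n z -> on_sphere n (fun i => -1 * z i).
Proof. unfold on_sphere. intros H. rewrite <- H. apply sumR_ext. intros; ring. Qed.

Lemma homog_zero K (Q : nat -> sfun) p : (forall i, (i < K)%nat -> HH n (2*i + p) (Q i)) ->
  (forall z, on_sphere n z -> Csum K (fun i => Q i z) = C0) -> forall i, (i < K)%nat -> forall y, Q i y = C0.
Proof. intros HQ Hs.
 apply (U0 n K Q). intros; eapply HH_HE; eauto.
 apply (vanish (2 * (K - 1) + p)).
 - apply Scl_Csum. intros k Hk. replace (2 * (K - 1) + p)%nat with (2 * (K - 1 - k) + (2*k+p))%nat by lia.
   apply Scl_Tm. destruct (HQ k Hk) as [_ [_ [_ [S _]]]]. exact S.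
 - apply Loc_Csum. intros k Hk. apply Loc_Tm. destruct (HQ k Hk) as [_ [_ [_ [_ L]]]]. exact L.
 - intros z Hz. rewrite <- (Hs z Hz). apply Csum_ext. intros k Hk. unfold Tm. rewrite rr_sphere by auto.
   assert (forall m, Cpow (RtoC 1) m = Defs.C1). { induction m; simpl; auto. rewrite IHm. Csolve. }
   rewrite H. apply Cmul_1_l. Qed.

Lemma U_HH K (P : nat -> sfun) : (forall k, (k < K)%nat -> HH n k (P k)) ->
  (forall z, on_sphere n z -> Csum K (fun k => P k z) = C0) ->
  forall k, (k < K)%nat -> forall z, on_sphere n z -> P k z = C0.
Proof. intros HP Hs.
 set (P' := fun k => if Nat.ltb k K then P k else (fun _ : nat -> R => C0)).
 assert (HP' : forall k, HH n k (P' k)).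
 { intros k. unfold P'. destruct (Nat.ltb k K) eqn:E. apply HP. apply Nat.ltb_lt; auto. apply HH_zero. }
 assert (S1 : forall z, on_sphere n z -> Csum (2*K) (fun k => P' k z) = C0).
 { intros z Hz. rewrite <- (Hs z Hz). rewrite <- (Csum_trunc (2*K) K (fun k => P k z)) by lia.
   apply Csum_ext. intros k _. unfold P'. destruct (Nat.ltb k K); reflexivity. }
 assert (EO : forall z, on_sphere n z -> Csum K (fun i => P' (2*i)%nat z) = C0 /\ Csum K (fun i => P' (2*i+1)%nat z) = C0).
 { intros z Hz. pose proof (S1 z Hz) as A1. pose proof (S1 _ (sphere_neg z Hz)) as A2.
   rewrite Csum_split2 in A1, A2.
   rewrite (Csum_ext K (fun i => P' (2*i)%nat (fun j => -1 * z j)) (fun i => P' (2*i)%nat z)) in A2.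
   rewrite (Csum_ext K (fun i => P' (2*i+1)%nat (fun j => -1 * z j)) (fun i => Cmul (RtoC (-1)) (P' (2*i+1)%nat z))) in A2.
   rewrite Csum_mull in A2.
   destruct (Csum K (fun i => P' (2*i)%nat z)) as [a b], (Csum K (fun i => P' (2*i+1)%nat z)) as [c d].
   unfold Cadd, Cmul, RtoC, C0 in A1, A2; simpl in A1, A2. injection A1; injection A2; intros.
   split; apply Cx_ext; simpl; lra.
   intros i _. rewrite (HH_neg (2*i+1)) by auto. rewrite pow_add, pow_1, pow_mult. replace ((-1)^2) with 1 by ring.
   rewrite pow1. f_equal. f_equal. ring.
   intros i _. rewrite (HH_neg (2*i)) by auto. rewrite pow_mult. replace ((-1)^2) with 1 by ring.
   rewrite pow1. apply Cmul_1_l. }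
 assert (E0 : forall i, (i < K)%nat -> forall y, P' (2*i)%nat y = C0).
 { apply (homog_zero K (fun i => P' (2*i)%nat) 0). intros; rewrite Nat.add_0_r; apply HP'.
   intros; apply EO; auto. }
 assert (O0 : forall i, (i < K)%nat -> forall y, P' (2*i+1)%nat y = C0).
 { apply (homog_zero K (fun i => P' (2*i+1)%nat) 1). intros; apply HP'.
   intros; apply EO; auto. }
 intros k Hk z Hz. assert (P k = P' k) by (unfold P'; rewrite (proj2 (Nat.ltb_lt k K) Hk); auto).
 rewrite H. destruct (Nat.Even_or_Odd k) as [[i Hi]|[i Hi]]; subst k.
 apply E0. lia. apply O0. lia. Qed.

End U.

Section F.
Variable n : nat.

Lemma Vsp_HH d h : Vsp n d h -> exists P, HH n d P /\ forall y, on_sphere n y -> h y = P y.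
Proof. intros [ps [F [H E]]]. exists (evalP n ps). split; auto. apply HH_evalP; auto. Qed.

Lemma Vsp_zero d : Vsp n d (fun _ => C0).
Proof. exists nil. split. constructor. split. intros y. rewrite evalP_nil. rewrite lap_const. reflexivity.
 intros; reflexivity. Qed.

Lemma decomp_single g f d h : Vsp n d h -> (forall y, on_sphere n y -> f y = h y) ->
  forall p, is_decomp n f p -> forall z, on_sphere n z ->
  Csum (fst p) (fun k => Cscale (g (eig n k)) (snd p k z)) = Cscale (g (eig n d)) (h z).
Proof. intros Hh Hf [K F] [HV HS] z Hz. simpl fst in *; simpl snd in *.
 set (W := fun k => epsilon (inhabits (fun _ : nat -> R => C0)) (fun P => HH n k P /\ forall y, on_sphere n y -> F k y = P y)).
 assert (HW : forall k, (k < K)%nat -> HH n k (W k) /\ forall y, on_sphere n y -> F k y = W k y).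
 { intros k Hk. unfold W. apply epsilon_spec. apply Vsp_HH; auto. }
 destruct (Vsp_HH d h Hh) as [Q [HQ EQ]].
 set (M := max K (S d)).
 set (A := fun k => if Nat.ltb k K then W k else (fun _ : nat -> R => C0)).
 set (B := fun k => if Nat.eqb k d then Q else (fun _ : nat -> R => C0)).
 set (D := fun k y => Cadd (A k y) (Cmul (RtoC (-1)) (B k y))).
 assert (HA : forall k, HH n k (A k)).
 { intros k; unfold A. destruct (Nat.ltb k K) eqn:E. apply HW. apply Nat.ltb_lt; auto. apply HH_zero. }
 assert (HB : forall k, HH n k (B k)).
 { intros k; unfold B. destruct (Nat.eqb k d) eqn:E. apply Nat.eqb_eq in E; subst; auto. apply HH_zero. }
 assert (SA : forall z, on_sphere n z -> Csum M (fun k => A k z) = f z).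
 { intros y Hy. rewrite (Csum_ext M _ (fun k => if Nat.ltb k K then W k y else C0)).
   rewrite Csum_trunc by lia. rewrite HS by auto. apply Csum_ext. intros k Hk. symmetry. apply HW; auto.
   intros k _. unfold A. destruct (Nat.ltb k K); auto. }
 assert (SB : forall z, on_sphere n z -> Csum M (fun k => B k z) = f z).
 { intros y Hy. rewrite (Csum_ext M _ (fun k => if Nat.eqb k d then Q y else C0)).
   rewrite Csum_delta by lia. rewrite Hf, EQ by auto. auto.
   intros k _. unfold B. destruct (Nat.eqb k d); auto. }
 assert (Z : forall k, (k < M)%nat -> D k z = C0).
 { intros k Hk. apply (U_HH n M D); auto.
   intros; unfold D; apply HH_add; auto. apply HH_cmul; auto.
   intros y Hy. unfold D. rewrite Csum_add, Csum_mull, SA, SB by auto. Csolve. }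
 assert (AB : forall k, (k < M)%nat -> A k z = B k z).
 { intros k Hk. specialize (Z k Hk). unfold D in Z. destruct (A k z), (B k z).
   unfold Cadd, Cmul, RtoC, C0 in Z; injection Z; intros. apply Cx_ext; simpl; lra. }
 rewrite (Csum_ext K _ (fun k => if Nat.eqb k d then Cscale (g (eig n d)) (h z) else C0)).
 - destruct (Nat.ltb d K) eqn:E. apply Csum_delta. apply Nat.ltb_lt; auto.
   rewrite (Csum_ext K _ (fun _ => C0)). rewrite Csum_zero.
   apply Nat.ltb_ge in E.
   assert (AB' := AB d ltac:(lia)). unfold A, B in AB'. rewrite Nat.eqb_refl in AB'.
   assert (Nat.ltb d K = false) by (apply Nat.ltb_ge; auto). rewrite H in AB'. rewrite (EQ z Hz), <- AB'.
   symmetry; apply Cscale_C0.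
   intros k Hk. destruct (Nat.eqb k d) eqn:E2; auto. apply Nat.eqb_eq in E2; apply Nat.ltb_ge in E; lia.
 - intros k Hk. destruct (HW k Hk) as [_ EW]. rewrite EW by auto.
   assert (A k z = W k z) by (unfold A; rewrite (proj2 (Nat.ltb_lt k K) Hk); auto). rewrite <- H.
   rewrite AB by lia. unfold B. destruct (Nat.eqb k d) eqn:E. apply Nat.eqb_eq in E; subst.
   rewrite (EQ z Hz); auto. apply Cscale_C0. Qed.

Lemma fcalc_single g f d h : Vsp n d h -> (forall y, on_sphere n y -> f y = h y) ->
  forall z, on_sphere n z -> fcalc n g f z = Cscale (g (eig n d)) (h z).
Proof. intros Hh Hf z Hz. unfold fcalc. apply (decomp_single g f d h Hh Hf); auto.
 apply epsilon_spec. exists (S d, fun k => if Nat.eqb k d then h else (fun _ => C0)). split.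
 - intros k Hk. simpl snd. destruct (Nat.eqb k d) eqn:E. apply Nat.eqb_eq in E; subst; auto. apply Vsp_zero.
 - intros y Hy. simpl. rewrite Nat.eqb_refl. rewrite (Csum_ext d _ (fun _ => C0)). rewrite Csum_zero.
   rewrite Hf by auto. Csolve. intros k Hk. destruct (Nat.eqb k d) eqn:E; auto. apply Nat.eqb_eq in E; lia. Qed.

End F.

Lemma rot0 k j y : rot k j 0 y = y.
Proof. apply functional_extensionality; intros i. unfold rot. rewrite cos_0, sin_0.
 destruct (Nat.eqb k j); auto. destruct (Nat.eqb i j) eqn:E. apply Nat.eqb_eq in E; subst; ring.
 destruct (Nat.eqb i k) eqn:E2. apply Nat.eqb_eq in E2; subst; ring. auto. Qed.

Definition rotder (f : sfun) k j y := Cadd (Cmul (RtoC (y k)) (pd j f y)) (Cmul (RtoC (- y j)) (pd k f y)).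

Lemma D_cos a : derivable_pt_lim (fun t => a * cos t) 0 0.
Proof. eapply D_ext. apply D_mult. apply D_const. apply derivable_pt_lim_cos. intros; reflexivity.
 rewrite sin_0; ring. Qed.
Lemma D_sin a : derivable_pt_lim (fun t => a * sin t) 0 a.
Proof. eapply D_ext. apply D_mult. apply D_const. apply derivable_pt_lim_sin. intros; reflexivity.
 rewrite cos_0; ring. Qed.

Lemma rot_var k j i y : derivable_pt_lim (fun t => rot k j t y i) 0
  (y k * (if Nat.eqb i j then 1 else 0) + - y j * (if Nat.eqb i k then 1 else 0)).
Proof. unfold rot. destruct (Nat.eqb k j) eqn:E1.
 - apply Nat.eqb_eq in E1; subst. eapply D_ext. apply D_const. intros; reflexivity.
   destruct (Nat.eqb i j); ring.
 - destruct (Nat.eqb i j) eqn:E2.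
   + apply Nat.eqb_eq in E2; subst. assert (Nat.eqb j k = false) by (apply Nat.eqb_neq; intros H; subst; rewrite Nat.eqb_refl in E1; discriminate).
     rewrite H. eapply D_ext. apply D_plus. apply (D_cos (y j)). apply (D_sin (y k)). intros; reflexivity. ring.
   + destruct (Nat.eqb i k) eqn:E3.
     * eapply D_ext. apply D_minus. apply (D_cos (y k)). apply (D_sin (y j)). intros; reflexivity. ring.
     * eapply D_ext. apply D_const. intros; reflexivity. ring. Qed.

Lemma rot_pd f : PP f -> forall k j y,
  derivable_pt_lim (fun t => Cre (f (rot k j t y))) 0 (Cre (rotder f k j y)) /\
  derivable_pt_lim (fun t => Cim (f (rot k j t y))) 0 (Cim (rotder f k j y)).
Proof. induction 1; intros k j y; unfold rotder.
 - rewrite !pd_const. split; eapply D_ext; try apply D_const; intros; simpl; try reflexivity; ring.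
 - rewrite !pd_var. split; simpl.
   + eapply D_ext. apply rot_var. intros; reflexivity. ring.
   + eapply D_ext. apply D_const. intros; reflexivity. ring.
 - rewrite !pd_add by auto. destruct (IHPP1 k j y) as [a b], (IHPP2 k j y) as [c d]. unfold rotder in *.
   split; simpl; eapply D_ext; [apply D_plus; [exact a|exact c]| intros; reflexivity | simpl; ring
                              | apply D_plus; [exact b|exact d]| intros; reflexivity | simpl; ring].
 - rewrite !pd_mul by auto. destruct (IHPP1 k j y) as [a b], (IHPP2 k j y) as [c d]. unfold rotder in *.
   split; simpl.
   + eapply (D_ext (fun t => Cre (f (rot k j t y)) * Cre (g (rot k j t y)) - Cim (f (rot k j t y)) * Cim (g (rot k j t y)))).
     apply D_minus; apply D_mult; eauto. intros; reflexivity. cbv beta. rewrite rot0. simpl. ring.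
   + eapply (D_ext (fun t => Cre (f (rot k j t y)) * Cim (g (rot k j t y)) + Cim (f (rot k j t y)) * Cre (g (rot k j t y)))).
     apply D_plus; apply D_mult; eauto. intros; reflexivity. cbv beta. rewrite rot0. simpl. ring. Qed.

Lemma sumR_add m f g : sumR m (fun i => f i + g i) = sumR m f + sumR m g.
Proof. induction m; simpl. ring. rewrite IHm; ring. Qed.
Lemma sumR_0 m : sumR m (fun _ => 0) = 0.
Proof. induction m; simpl; auto. rewrite IHm; ring. Qed.
Lemma sumR_delta m j a : (j < m)%nat -> sumR m (fun i => if Nat.eqb i j then a else 0) = a.
Proof. induction m; intros H. lia. simpl. destruct (Nat.eqb m j) eqn:E.
 apply Nat.eqb_eq in E; subst. rewrite (sumR_ext j _ (fun _ => 0)). rewrite sumR_0; ring.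
 intros k Hk. destruct (Nat.eqb k j) eqn:E; auto. apply Nat.eqb_eq in E; lia.
 rewrite IHm. ring. apply Nat.eqb_neq in E; lia. Qed.

Lemma rot_sphere n k j t y : (k < n+1)%nat -> (j < n+1)%nat -> on_sphere n y -> on_sphere n (rot k j t y).
Proof. intros Hk Hj H. unfold on_sphere in *. unfold rot. destruct (Nat.eqb k j) eqn:E; auto.
 apply Nat.eqb_neq in E.
 set (A := (y j * cos t + y k * sin t) ^ 2 - y j ^ 2).
 set (B := (y k * cos t - y j * sin t) ^ 2 - y k ^ 2).
 rewrite (sumR_ext (n+1) _ (fun i => y i ^ 2 + (if Nat.eqb i j then A else 0) + (if Nat.eqb i k then B else 0))).
 rewrite !sumR_add, !sumR_delta by auto. rewrite H. unfold A, B.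
 pose proof (sin2_cos2 t). unfold Rsqr in H0. nra.
 intros i Hi. destruct (Nat.eqb i j) eqn:E1. apply Nat.eqb_eq in E1; subst.
 assert (Nat.eqb j k = false) by (apply Nat.eqb_neq; auto). rewrite H0. unfold A. ring.
 destruct (Nat.eqb i k) eqn:E2. unfold B. apply Nat.eqb_eq in E2; subst. ring. ring. Qed.

Lemma Lvf_eq n k j F G y : (k < n+1)%nat -> (j < n+1)%nat -> on_sphere n y -> PP G ->
  (forall z, on_sphere n z -> F z = G z) -> Lvf k j F y = rotder G k j y.
Proof. intros Hk Hj Hy PG E. unfold Lvf.
 replace (fun t => Cre (F (rot k j t y))) with (fun t => Cre (G (rot k j t y))).
 replace (fun t => Cim (F (rot k j t y))) with (fun t => Cim (G (rot k j t y))).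
 destruct (rot_pd G PG k j y) as [a b]. rewrite (deriv0_eq _ _ a), (deriv0_eq _ _ b).
 destruct (rotder G k j y); reflexivity.
 all: apply functional_extensionality; intros t; rewrite E; auto; apply rot_sphere; auto. Qed.

Section H.
Variable n : nat.

Definition scaleL (a : Cx) (ps : list (Cx * (nat -> nat))) := map (fun m => (Cmul a (fst m), snd m)) ps.

Lemma evalP_scaleL a ps y : evalP n (scaleL a ps) y = Cmul a (evalP n ps y).
Proof. induction ps. simpl. Csolve. simpl scaleL. rewrite !evalP_cons. cbv beta. rewrite IHps. simpl. Csolve. Qed.

Lemma Vsp_of l ps a : Forall (fun m => sumN (n+1) (snd m) = l) ps -> harmonic n (evalP n ps) ->
  Vsp n l (fun y => Cmul a (evalP n ps y)).
Proof. intros F H. exists (scaleL a ps). split.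
 unfold scaleL. apply Forall_map. eapply Forall_impl; [|exact F]. simpl; auto.
 split. intros y. replace (evalP n (scaleL a ps)) with (fun y => Cmul a (evalP n ps y)).
 rewrite lap_cmul by apply PP_evalP. rewrite H. Csolve.
 apply functional_extensionality; intros; rewrite evalP_scaleL; auto.
 intros; rewrite evalP_scaleL; auto. Qed.

Lemma Vsp_sphere d h h' : Vsp n d h -> (forall y, on_sphere n y -> h' y = h y) -> Vsp n d h'.
Proof. intros [ps [F [H E]]] E'. exists ps. split; auto. split; auto. intros; rewrite E'; auto. Qed.

Lemma sumN_dec m e k : (k < m)%nat -> (0 < e k)%nat -> sumN m (dec e k) = (sumN m e - 1)%nat.
Proof. induction m; intros H1 H2. lia. simpl. unfold dec at 2. destruct (Nat.eqb m k) eqn:E.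
 apply Nat.eqb_eq in E; subst. assert (sumN k (dec e k) = sumN k e).
 { clear. assert (forall j, (j <= k)%nat -> sumN j (dec e k) = sumN j e). induction j; simpl; auto. intros.
   rewrite IHj by lia. unfold dec. assert (Nat.eqb j k = false) by (apply Nat.eqb_neq; lia). rewrite H0; auto.
   apply H; lia. }
 rewrite H. lia. apply Nat.eqb_neq in E. rewrite IHm by lia. assert (sumN m e >= e k)%nat.
 { clear - H1 E. assert (k < m)%nat by lia. clear H1 E. induction m. lia. simpl. destruct (Nat.eq_dec k m). subst; lia.
   assert (k < m)%nat by lia. specialize (IHm H0). lia. }
 lia. Qed.

Lemma dlist_deg k l ps : (k < n+1)%nat -> Forall (fun m => sumN (n+1) (snd m) = l) ps ->
  Forall (fun m => sumN (n+1) (snd m) = (l - 1)%nat) (dlist k ps).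
Proof. intros Hk F. unfold dlist. apply Forall_map. apply Forall_forall. intros [c e] Hin.
 apply filter_In in Hin. destruct Hin as [Hin Hp]. simpl in *. apply Nat.ltb_lt in Hp.
 rewrite Forall_forall in F. specialize (F _ Hin). simpl in F. rewrite sumN_dec by auto. lia. Qed.

Lemma lap_pd k P : PP P -> laplacian n (pd k P) = pd k (laplacian n P).
Proof. intros HP. unfold laplacian at 2. rewrite (pd_Csum k (n+1) (fun j => pd j (pd j P))).
 apply functional_extensionality; intros y. unfold laplacian. apply Csum_ext. intros j _.
 rewrite (pd_comm P HP j k). rewrite (pd_comm (pd j P) (PP_pd _ _ HP) j k). reflexivity.
 intros; do 2 apply PP_pd; auto. Qed.

Lemma dlist_harm k ps : (k < n+1)%nat -> harmonic n (evalP n ps) -> harmonic n (evalP n (dlist k ps)).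
Proof. intros Hk H y. rewrite <- pd_evalP by auto. rewrite lap_pd by apply PP_evalP.
 replace (laplacian n (evalP n ps)) with (fun _ : nat -> R => C0). rewrite pd_const; auto.
 apply functional_extensionality; intros; rewrite H; auto. Qed.

Lemma dlist_nil k ps : (k < n+1)%nat -> Forall (fun m => sumN (n+1) (snd m) = O) ps -> dlist k ps = nil.
Proof. intros Hk F. unfold dlist. induction F. reflexivity. simpl. rewrite (sumN_zero (n+1) (snd x) k H Hk).
 simpl. auto. Qed.

Definition mmf (lam : R) := sqrt (2 / (INR n - 1)) * sqrt (sqrt lam).

Lemma sqrt_eig l : (1 <= n)%nat -> sqrt (eig n l) = INR l + (INR n - 1) / 2.
Proof. intros H. unfold eig. apply sqrt_pow2. apply le_INR in H. simpl in H. pose proof (pos_INR l). lra. Qed.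

Variable hbar : R.

Lemma Aop_main l k ps f : (2 <= n)%nat -> (k < n+1)%nat ->
  Forall (fun m => sumN (n+1) (snd m) = l) ps -> harmonic n (evalP n ps) ->
  (forall y, on_sphere n y -> f y = evalP n ps y) ->
  forall z, on_sphere n z ->
  Aop n hbar k f z = Cscale (mmf (eig n (l - 1)) * (hbar * / mmf (eig n l))) (evalP n (dlist k ps) z).
Proof. intros Hn Hk F Hh Hf z Hz.
 set (c := / mmf (eig n l)). set (P := evalP n ps). set (Pm := fun y => Cmul (RtoC c) (P y)).
 assert (VP : Vsp n l f). { exists ps; auto. }
 assert (VPm : Vsp n l Pm) by (apply Vsp_of; auto).
 assert (HPm : HH n l Pm) by (apply HH_cmul, HH_evalP; auto).
 assert (PPm' : PP Pm) by (apply PPm; [apply PPc|apply PP_evalP]).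
 assert (S1 : forall y, on_sphere n y -> Minv n f y = Pm y).
 { intros y Hy. unfold Minv. rewrite (fcalc_single n _ f l f VP) by auto. unfold Pm, P. rewrite Hf by auto. reflexivity. }
 assert (S2 : forall y, on_sphere n y -> Nop n hbar (Minv n f) y = Cscale (hbar * INR l) (Pm y)).
 { intros y Hy. unfold Nop. rewrite (fcalc_single n _ _ l Pm VPm) by auto. rewrite sqrt_eig by lia.
   f_equal. ring. }
 assert (S3 : forall j, (j < n+1)%nat -> Lvf k j (Minv n f) z = rotder Pm k j z).
 { intros j Hj. apply (Lvf_eq n); auto. }
 assert (PDk : pd k Pm = fun y => Cmul (RtoC c) (evalP n (dlist k ps) y)).
 { unfold Pm. rewrite pd_cmul by apply PP_evalP. unfold P. rewrite pd_evalP by auto. reflexivity. }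
 assert (S4 : forall y, on_sphere n y -> Eop n hbar k (Minv n f) y = Cmul (RtoC (hbar * c)) (evalP n (dlist k ps) y)).
 { intros y Hy. unfold Eop. 
   rewrite (Csum_ext (n+1) _ (fun j => Cadd (Cmul (RtoC (- hbar * y k)) (Cmul (RtoC (y j)) (pd j Pm y)))
        (Cmul (Cmul (RtoC hbar) (pd k Pm y)) (Cmul (RtoC (y j)) (RtoC (y j)))))).
   rewrite Csum_add, !Csum_mull. destruct HPm as [_ [_ [EP _]]]. rewrite EP.
   change (Csum (n+1) (fun j => Cmul (RtoC (y j)) (RtoC (y j)))) with (rr n y). rewrite rr_sphere by auto.
   unfold xmul. rewrite S2 by auto. rewrite PDk. unfold Cscale. Csolve.
   intros j Hj. rewrite (Lvf_eq n k j (Minv n f) Pm y) by auto. unfold rotder. Csolve. }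
 unfold Aop, Mop. rewrite (fcalc_single n _ _ (l - 1) (fun y => Cmul (RtoC (hbar * c)) (evalP n (dlist k ps) y))).
 fold (mmf (eig n (l-1))). unfold Cscale. Csolve.
 apply Vsp_of. apply dlist_deg; auto. apply dlist_harm; auto.
 auto. auto. Qed.

End H.

Section I.
Variable n : nat.

Lemma prodR_1 m : prodR m (fun _ => 1) = 1.
Proof. induction m; simpl; auto. rewrite IHm; ring. Qed.
Lemma monom_zero y : monom n (fun _ => O) y = 1.
Proof. unfold monom. rewrite (prodR_ext _ _ (fun _ => 1)). apply prodR_1. intros; simpl; auto. Qed.
Lemma monom_add e e' y : monom n (fun i => (e i + e' i)%nat) y = monom n e y * monom n e' y.
Proof. unfold monom. generalize (n+1)%nat. induction n0; simpl. ring. rewrite IHn0, pow_add. ring. Qed.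
Lemma sumN_ext m e e' : (forall i, (i < m)%nat -> e i = e' i) -> sumN m e = sumN m e'.
Proof. induction m; simpl; intros H; auto. rewrite IHm by (intros; apply H; lia). rewrite H by lia; auto. Qed.
Lemma sumN_add m e e' : sumN m (fun i => (e i + e' i)%nat) = (sumN m e + sumN m e')%nat.
Proof. induction m; simpl; auto. rewrite IHm; lia. Qed.
Lemma sumN_0 m : sumN m (fun _ => O) = O.
Proof. induction m; simpl; auto. rewrite IHm; auto. Qed.
Lemma sumN_delta m j : (j < m)%nat -> sumN m (fun i => if Nat.eqb i j then 1%nat else O) = 1%nat.
Proof. induction m; intros H. lia. simpl. destruct (Nat.eqb m j) eqn:E.
 apply Nat.eqb_eq in E; subst. rewrite (sumN_ext j _ (fun _ => O)). rewrite sumN_0; auto.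
 intros i Hi. destruct (Nat.eqb i j) eqn:E; auto. apply Nat.eqb_eq in E; lia.
 apply Nat.eqb_neq in E. rewrite IHm by lia. lia. Qed.
Lemma monom_delta j y : (j < n+1)%nat -> monom n (fun i => if Nat.eqb i j then 1%nat else O) y = y j.
Proof. intros Hj. unfold monom. rewrite (prodR_upd (n+1) _ (fun _ => 1) j (y j)); auto.
 rewrite prodR_1; ring. intros i Hi. apply Nat.eqb_neq in Hi. rewrite Hi. auto.
 rewrite Nat.eqb_refl. simpl. ring. Qed.

Lemma evalP_app ps qs y : evalP n (ps ++ qs) y = Cadd (evalP n ps y) (evalP n qs y).
Proof. induction ps. simpl. Csolve. simpl app. rewrite !evalP_cons. cbv beta. rewrite IHps. Csolve. Qed.

Definition pmul (ps qs : list (Cx * (nat -> nat))) : list (Cx * (nat -> nat)) :=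
  flat_map (fun a => map (fun b => (Cmul (fst a) (fst b), fun i => (snd a i + snd b i)%nat)) qs) ps.

Lemma evalP_map1 (a : Cx * (nat -> nat)) qs y : evalP n (map (fun b => (Cmul (fst a) (fst b), fun i => (snd a i + snd b i)%nat)) qs) y =
   Cmul (Cmul (fst a) (RtoC (monom n (snd a) y))) (evalP n qs y).
Proof. induction qs. simpl. Csolve. simpl map. rewrite !evalP_cons. cbv beta. rewrite IHqs.
   simpl fst; simpl snd. rewrite monom_add. Csolve. Qed.

Lemma evalP_pmul ps qs y : evalP n (pmul ps qs) y = Cmul (evalP n ps y) (evalP n qs y).
Proof. induction ps as [|a ps IH]. simpl. Csolve. unfold pmul. simpl flat_map. rewrite evalP_app.
 fold (pmul ps qs). rewrite IH. rewrite evalP_cons. cbv beta.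
 rewrite evalP_map1. Csolve. Qed.

Lemma pmul_deg a b ps qs : Forall (fun m => sumN (n+1) (snd m) = a) ps -> Forall (fun m => sumN (n+1) (snd m) = b) qs ->
  Forall (fun m => sumN (n+1) (snd m) = (a + b)%nat) (pmul ps qs).
Proof. intros F G. apply Forall_forall. intros x Hx. unfold pmul in Hx. apply in_flat_map in Hx.
 destruct Hx as [u [Hu Hx]]. apply in_map_iff in Hx. destruct Hx as [v [Ev Hv]]. subst x. simpl.
 rewrite sumN_add. rewrite Forall_forall in F, G. rewrite (F u Hu), (G v Hv). auto. Qed.

Fixpoint ppow (ps : list (Cx * (nat -> nat))) (m : nat) : list (Cx * (nat -> nat)) :=
  match m with O => (Defs.C1, fun _ => O) :: nil | S m' => pmul (ppow ps m') ps end.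

Lemma evalP_ppow ps m y : evalP n (ppow ps m) y = Cpow (evalP n ps y) m.
Proof. induction m; simpl ppow. rewrite evalP_cons. cbv beta. simpl fst; simpl snd. rewrite monom_zero. simpl. Csolve.
 rewrite evalP_pmul, IHm. reflexivity. Qed.

Lemma ppow_deg ps m : Forall (fun m => sumN (n+1) (snd m) = 1%nat) ps ->
  Forall (fun x => sumN (n+1) (snd x) = m) (ppow ps m).
Proof. intros F. induction m; simpl ppow. constructor. simpl. apply sumN_0. constructor.
 replace (S m) with (m + 1)%nat by lia. apply pmul_deg; auto. Qed.

Definition adl (alpha : nat -> Cx) := map (fun j => (alpha j, fun i => if Nat.eqb i j then 1%nat else O)) (seq 0 (n+1)).

Lemma evalP_adl alpha y : evalP n (adl alpha) y = adot n alpha y.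
Proof. unfold adl, adot. assert (forall m, (m <= n+1)%nat ->
  evalP n (map (fun j => (alpha j, fun i => if Nat.eqb i j then 1%nat else O)) (seq 0 m)) y =
  Csum m (fun j => Cmul (alpha j) (RtoC (y j)))).
 { induction m; intros Hm. reflexivity. rewrite seq_S, map_app, evalP_app, IHm by lia. simpl map.
   rewrite evalP_cons. cbv beta. simpl fst; simpl snd. rewrite monom_delta by lia. simpl. Csolve. }
 apply H; auto. Qed.

Lemma adl_deg alpha : Forall (fun m => sumN (n+1) (snd m) = 1%nat) (adl alpha).
Proof. unfold adl. apply Forall_forall. intros x Hx. apply in_map_iff in Hx. destruct Hx as [j [E Hj]].
 subst x. simpl. apply in_seq in Hj. apply sumN_delta. lia. Qed.

Lemma PP_adot alpha : PP (adot n alpha).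
Proof. unfold adot. apply (PP_Csum (n+1) (fun j y => Cmul (alpha j) (RtoC (y j)))). intros; apply PPm; [apply PPc|apply PPv]. Qed.

Lemma pd_adot alpha j : (j < n+1)%nat -> pd j (adot n alpha) = (fun _ => alpha j).
Proof. intros Hj. unfold adot. rewrite (pd_Csum j (n+1) (fun k y => Cmul (alpha k) (RtoC (y k)))).
 apply functional_extensionality; intros y. rewrite (Csum_ext (n+1) _ (fun k => if Nat.eqb k j then alpha j else C0)).
 apply Csum_delta; auto. intros k _. rewrite pd_cmul by apply PPv. rewrite pd_var.
 destruct (Nat.eqb k j) eqn:E. apply Nat.eqb_eq in E; subst. Csolve. Csolve.
 intros; apply PPm; [apply PPc|apply PPv]. Qed.

Lemma pd_Cpow A j m : PP A -> pd j (fun y => Cpow (A y) m) = (fun y => Cmul (RtoC (INR m)) (Cmul (Cpow (A y) (m - 1)) (pd j A y))).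
Proof. intros HA. induction m.
 - simpl Cpow. rewrite pd_const. apply functional_extensionality; intros; simpl; Csolve.
 - simpl Cpow. rewrite pd_mul by (auto; apply PP_Cpow; auto). rewrite IHm. apply functional_extensionality; intros y.
   rewrite S_INR. destruct m. simpl. Csolve. replace (S (S m) - 1)%nat with (S m) by lia.
   replace (S m - 1)%nat with m by lia. simpl Cpow. Csolve. Qed.

Lemma harm_adot_pow alpha l : Csum (n + 1) (fun j => Cmul (alpha j) (alpha j)) = C0 ->
  harmonic n (fun y => Cpow (adot n alpha y) l).
Proof. intros H0 y. unfold laplacian.
 rewrite (Csum_ext (n+1) _ (fun j => Cmul (Cmul (RtoC (INR l)) (Cmul (RtoC (INR (l - 1))) (Cpow (adot n alpha y) (l - 1 - 1))))
    (Cmul (alpha j) (alpha j)))).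
 rewrite Csum_mull, H0. Csolve.
 intros j Hj. rewrite pd_Cpow by apply PP_adot. rewrite pd_adot by auto.
 rewrite pd_cmul by (apply PPm; [apply PP_Cpow, PP_adot|apply PPc]).
 rewrite pd_mul by (try apply PP_Cpow; try apply PP_adot; apply PPc).
 rewrite pd_Cpow by apply PP_adot. rewrite pd_adot, pd_const by auto. Csolve. Qed.

End I.

Lemma scal_ratio n l : (2 <= n)%nat -> (1 <= l)%nat ->
  mmf n (eig n (l - 1)) * / mmf n (eig n l) = sqrt ((2 * (INR l - 1) + INR n - 1) / (2 * INR l + INR n - 1)).
Proof. intros Hn Hl. unfold mmf. rewrite !sqrt_eig by lia. rewrite minus_INR by lia. simpl INR.
 apply le_INR in Hn. apply le_INR in Hl. simpl in Hn, Hl.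
 assert (Hs : 0 < sqrt (2 / (INR n - 1))). { apply sqrt_lt_R0. apply Rdiv_lt_0_compat; lra. }
 assert (Hb : 0 < sqrt (INR l + (INR n - 1) / 2)) by (apply sqrt_lt_R0; lra).
 replace (sqrt (2 / (INR n - 1)) * sqrt (INR l - 1 + (INR n - 1) / 2) * / (sqrt (2 / (INR n - 1)) * sqrt (INR l + (INR n - 1) / 2)))
  with (sqrt (INR l - 1 + (INR n - 1) / 2) / sqrt (INR l + (INR n - 1) / 2)) by (field; lra).
 rewrite <- sqrt_div_alt by lra. f_equal. field. lra. Qed.

Theorem mainTheorem13 (n : nat) (hbar : R) :
  (n = 2%nat \/ n = 3%nat \/ n = 5%nat) -> 0 < hbar ->
  (forall (alpha : nat -> Cx) (l k : nat),
      Csum (n + 1) (fun j => Cmul (alpha j) (alpha j)) = C0 ->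
      (1 <= l)%nat -> (k < n + 1)%nat ->
      forall y, on_sphere n y ->
        Aop n hbar k (fun x => Cpow (adot n alpha x) l) y =
        Cscale (hbar * INR l *
                sqrt ((2 * (INR l - 1) + INR n - 1) / (2 * INR l + INR n - 1)))
               (Cmul (alpha k) (Cpow (adot n alpha y) (l - 1)))) /\
  (forall (k : nat) (c : Cx), (k < n + 1)%nat ->
      forall y, on_sphere n y -> Aop n hbar k (fun _ => c) y = C0) /\
  (forall (k l : nat) (f : sfun), (k < n + 1)%nat -> (0 < l)%nat ->
      Vsp n l f -> Vsp n (l - 1) (Aop n hbar k f)) /\
  (forall (k : nat) (f : sfun), (k < n + 1)%nat -> Vsp n 0 f ->
      forall y, on_sphere n y -> Aop n hbar k f y = C0).
Proof.
 intros Hn Hh. assert (n2 : (2 <= n)%nat) by lia. split; [|split; [|split]].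
 - intros alpha l k Ha Hl Hk y Hy.
   set (ps := ppow (adl n alpha) l).
   assert (Eps : evalP n ps = fun x => Cpow (adot n alpha x) l).
   { apply functional_extensionality; intros x. unfold ps. rewrite evalP_ppow. f_equal. apply evalP_adl. }
   assert (F : Forall (fun m => sumN (n+1) (snd m) = l) ps) by (apply ppow_deg, adl_deg).
   assert (Hm : harmonic n (evalP n ps)) by (rewrite Eps; apply harm_adot_pow; auto).
   rewrite (Aop_main n hbar l k ps) by (auto; intros; rewrite Eps; auto).
   rewrite <- pd_evalP by auto. rewrite Eps. rewrite pd_Cpow by apply PP_adot. rewrite pd_adot by auto.
   rewrite <- Rmult_assoc, (Rmult_comm _ hbar), Rmult_assoc, scal_ratio by auto. unfold Cscale. Csolve.
 - intros k c Hk y Hy.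
   set (ps := (c, fun _ : nat => O) :: nil).
   assert (Eps : evalP n ps = fun _ => c).
   { apply functional_extensionality; intros x. unfold ps. rewrite evalP_cons. cbv beta. simpl fst; simpl snd.
     rewrite monom_zero. simpl. Csolve. }
   assert (F : Forall (fun m => sumN (n+1) (snd m) = O) ps) by (constructor; [apply sumN_0|constructor]).
   assert (Hm : harmonic n (evalP n ps)) by (intros z; rewrite Eps, lap_const; auto).
   rewrite (Aop_main n hbar O k ps) by (auto; intros; rewrite Eps; auto).
   rewrite (dlist_nil n) by auto. apply Cscale_C0.
 - intros k l f Hk Hl [ps [F [Hm E]]].
   apply (Vsp_sphere n (l - 1) (fun y => Cmul (RtoC (mmf n (eig n (l - 1)) * (hbar * / mmf n (eig n l)))) (evalP n (dlist k ps) y))).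
   apply Vsp_of. apply dlist_deg; auto. apply dlist_harm; auto.
   intros y Hy. rewrite (Aop_main n hbar l k ps) by auto. reflexivity.
 - intros k f Hk [ps [F [Hm E]]] y Hy.
   rewrite (Aop_main n hbar O k ps) by auto. rewrite (dlist_nil n) by auto. apply Cscale_C0.
Qed.
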